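(* Let $\mu>0$, let $V^{*}_{\mu}$ be the fixed point of $\mathcal{B}_{\mu}$ and $V^{*}$ the fixed point of $\mathcal{B}$. Then $$\|V^{*}_{\mu}-V^{*}\|_{\infty}\le\frac{\mu\cdot\max\{|1-\mathbf{C}|,1\}}{1-\gamma}.$$
   Context: Markov decision process with state space $\mathcal{S}$, action space $\mathcal{A}\subseteq\mathbb{R}$, transition kernel $\mathbf{P}$, bounded reward $R(s',s,a)$, discount $\gamma\in[0,1)$. Standing assumption: all policies are conditional densities on $\mathcal{A}$ (w.r.t. Lebesgue measure) bounded by the constant $\mathbf{C}$; this class is $\Pi_{\mathbf{C}}$. For bounded $V$, $Q_V(s,a)=\mathbb{E}_{S'\sim\mathbf{P}(\cdot\mid s,a)}[R(S',s,a)+\gamma V(S')]$, $\mathcal{B}V(s)=\sup_{\pi\in\Pi_{\mathbf{C}}}\int_{\mathcal{A}}Q_V(s,a)\pi(a\mid s)\,da$, and $\mathcal{B}_{\mu}V(s)=\sup_{\pi\in\Pi_{\mathbf{C}}}\int_{\mathcal{A}}[Q_V(s,a)\pi(a\mid s)+\mu(\pi(a\mid s)-\pi(a\mid s)^2)]\,da$. *)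

(* Defs.v *)
From HB Require Import structures.
From mathcomp Require Import all_boot all_order all_algebra.
From mathcomp Require Import all_classical all_reals all_analysis.
Set Implicit Arguments. Unset Strict Implicit. Unset Printing Implicit Defensive.
Import Order.TTheory GRing.Theory Num.Theory.
Import numFieldNormedType.Exports.
Local Open Scope classical_set_scope.
Local Open Scope ring_scope.

Section MDP.
Context {R : realType} {d : measure_display} {S : measurableType d}.

Notation leb := (@lebesgue_measure R).

Definition Qfun (P : R.-pker (S * R)%type ~> S) (Rew : S -> S -> R -> R)
  (gamma : R) (V : S -> R) (s : S) (a : R) : R :=
  Rintegral (P (s, a)) setT (fun s' => Rew s' s a + gamma * V s').

Definition density_bounded (A : set R) (C : R) (p : R -> R) : Prop :=
  [/\ measurable_fun A p,
      (forall a, A a -> 0 <= p a <= C) &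
      (\int[leb]_(a in A) (p a)%:E = 1)%E].

Definition PiC (A : set R) (C : R) : set (S -> R -> R) :=
  [set pi | forall s, density_bounded A C (pi s)].

Definition Bop (A : set R) (C : R) (P : R.-pker (S * R)%type ~> S)
  (Rew : S -> S -> R -> R) (gamma : R) (V : S -> R) (s : S) : \bar R :=
  ereal_sup [set (\int[leb]_(a in A) (Qfun P Rew gamma V s a * pi s a)%:E)%E
            | pi in PiC A C].

Definition Bmuop (A : set R) (C : R) (P : R.-pker (S * R)%type ~> S)
  (Rew : S -> S -> R -> R) (gamma mu : R) (V : S -> R) (s : S) : \bar R :=
  ereal_sup [set (\int[leb]_(a in A)
                 (Qfun P Rew gamma V s a * pi s a
                  + mu * (pi s a - pi s a ^+ 2))%:E)%E
            | pi in PiC A C].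

End MDP.

(* Main.v *)
Require Import Defs.
From HB Require Import structures.
From mathcomp Require Import all_boot all_order all_algebra.
From mathcomp Require Import all_classical all_reals all_analysis.
From mathcomp Require Import ring lra measurable_realfun.
Import Order.TTheory GRing.Theory Num.Theory.
Import numFieldNormedType.Exports.
Local Open Scope classical_set_scope.
Local Open Scope ring_scope.

Section K.
Context (R : realType) (d : measure_display) (S : measurableType d)
  (P : R.-pker (S * R)%type ~> S).


Lemma PT x : P x setT = 1%E.
Proof. exact: prob_kernel. Qed.

Lemma bnd_int x (g : S -> R) (M : R) : measurable_fun setT g -> (forall y, `|g y| <= M) ->
  (P x).-integrable setT (EFin \o g).
Proof.
move=> mg gM; apply/integrableP; split; first exact/measurable_EFinP.
apply: (@le_lt_trans _ _ (\int[P x]_(y in setT) (cst M%:E y))%E).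
  apply: ge0_le_integral => //.
  all: try by do 2 apply: measurableT_comp => //.
  all: try by move=> y _; rewrite lee_fin (le_trans _ (gM y)).
  all: try by move=> y _ ; rewrite lee_fin gM.
  all: idtac.
by rewrite integral_cst // PT mule1 ltry.
Qed.

Lemma Rint_bnd x (g : S -> R) (M : R) : measurable_fun setT g -> (forall y, `|g y| <= M) ->
  `|Rintegral (P x) setT g| <= M.
Proof.
move=> mg gM.
have h1 := @le_normr_Rintegral _ _ _ (P x) setT g measurableT (bnd_int x g M mg gM).
apply: le_trans h1 _.
have iM : (P x).-integrable setT (EFin \o cst M).
  apply: (bnd_int x (cst M) `|M|) => //.
rewrite (@le_trans _ _ (Rintegral (P x) setT (cst M))) //.
  apply: le_Rintegral => //.
  apply: (bnd_int x _ M) => //; first exact: measurableT_comp.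
  by move=> y; rewrite normr_id.
by rewrite Rintegral_cst // PT /= mulr1.
Qed.

Variables (Rew : S -> S -> R -> R) (gamma : R) (V : S -> R) (MR MV : R).
Hypothesis mRew : measurable_fun setT (fun x : S * (S * R) => Rew x.1 x.2.1 x.2.2).
Hypothesis hMR : forall s' s a, `|Rew s' s a| <= MR.
Hypothesis mV : measurable_fun setT V.
Hypothesis hMV : forall s, `|V s| <= MV.
Hypothesis g0 : 0 <= gamma.

Lemma msec s a : measurable_fun setT (fun s' => Rew s' s a + gamma * V s').
Proof.
apply: measurable_funD.
  exact: (measurableT_comp mRew (pair2_measurable (s, a))).
exact: measurable_funM.
Qed.

Lemma bsec s a s' : `|Rew s' s a + gamma * V s'| <= MR + gamma * MV.
Proof.
apply: le_trans (ler_normD _ _) _; apply: lerD => //.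
by rewrite normrM (ger0_norm g0) ler_wpM2l.
Qed.

Lemma Qbnd s a : `|Qfun P Rew gamma V s a| <= MR + gamma * MV.
Proof. exact: Rint_bnd (msec s a) (bsec s a). Qed.

Lemma Qmeas s : measurable_fun setT (Qfun P Rew gamma V s).
Proof.
pose K := MR + gamma * MV.
pose f := fun z : (S * R) * S => Rew z.2 z.1.1 z.1.2 + gamma * V z.2 + K.
have mf : measurable_fun setT f.
  apply: measurable_funD => //; apply: measurable_funD.
    have -> : (fun z : (S * R) * S => Rew z.2 z.1.1 z.1.2) =
      (fun x : S * (S * R) => Rew x.1 x.2.1 x.2.2) \o (fun z : (S * R) * S => (z.2, z.1)) by [].
    apply: (measurableT_comp mRew); apply/measurable_fun_pairP; split; [exact: measurable_snd|exact: measurable_fst].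
  apply: measurable_funM => //; exact: measurableT_comp.
have f0 : forall z, (0 <= (f z)%:E)%E.
  move=> z; rewrite lee_fin /f; have := bsec z.1.1 z.1.2 z.2.
  rewrite -/K => h; have := ler_norm (- (Rew z.2 z.1.1 z.1.2 + gamma * V z.2)).
  rewrite normrN => h2; lra.
have mh := measurable_fun_integral_sfinite_kernel (fun z => (f z)%:E) P f0
  (proj2 (measurable_EFinP _ _) mf).
have eqQ : Qfun P Rew gamma V s = fun a => fine (\int[P (s, a)]_y (f ((s, a), y))%:E) - K.
  apply/funext => a; rewrite /Qfun.
  have -> : fine (\int[P (s, a)]_y (f ((s, a), y))%:E) =
     Rintegral (P (s,a)) setT (fun y => (Rew y s a + gamma * V y) + K) by [].
  rewrite (@RintegralD _ _ _ (P (s, a)) setT (fun y => Rew y s a + gamma * V y) (cst K)) //.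
  - by rewrite Rintegral_cst // PT /= mulr1 addrK.
  - exact: (bnd_int _ _ _ (msec s a) (bsec s a)).
  - by apply: (bnd_int _ _ `|K|) => //.
rewrite eqQ; apply: measurable_funB => //.
apply: (measurableT_comp (fine_measurable measurableT)).
exact: (measurableT_comp mh (pair1_measurable s)).
Qed.

Lemma Qdiff (V2 : S -> R) (D : R) s a : measurable_fun setT V2 -> (forall s, `|V2 s| <= MV) ->
  (forall s', `|V s' - V2 s'| <= D) ->
  `|Qfun P Rew gamma V s a - Qfun P Rew gamma V2 s a| <= gamma * D.
Proof.
move=> mV2 hMV2 hD; rewrite /Qfun -RintegralB //; last first.
- apply: (bnd_int _ _ (MR + gamma * MV)) => //.
  + apply: measurable_funD.
      exact: (measurableT_comp mRew (pair2_measurable (s, a))).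
    exact: measurable_funM.
  + move=> s'; apply: le_trans (ler_normD _ _) _; apply: lerD => //.
    by rewrite normrM (ger0_norm g0) ler_wpM2l.
- exact: (bnd_int _ _ _ (msec s a) (bsec s a)).
apply: Rint_bnd.
  apply: measurable_funB; first exact: msec.
  apply: measurable_funD.
    exact: (measurableT_comp mRew (pair2_measurable (s, a))).
  exact: measurable_funM.
move=> s'; have -> : Rew s' s a + gamma * V s' - (Rew s' s a + gamma * V2 s') =
  gamma * (V s' - V2 s') by ring.
rewrite normrM (ger0_norm g0).
by rewrite ler_wpM2l.
Qed.
End K.

Section L.
Context (R : realType) (A : set R) (C : R) (p : R -> R).
Notation leb := (@lebesgue_measure R).
Hypothesis mA : @measurable _ (measurableTypeR R) A.
Hypothesis hp : density_bounded A C p.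

Lemma p_meas : measurable_fun A p. Proof. by case: hp. Qed.
Lemma p_bnd a : A a -> 0 <= p a <= C. Proof. by case: hp => _ h _; apply: h. Qed.
Lemma p_int1 : (\int[leb]_(a in A) (p a)%:E = 1)%E. Proof. by case: hp. Qed.

Lemma qp_int (q : R -> R) (B : R) : measurable_fun A q -> (forall a, A a -> `|q a| <= B) ->
  leb.-integrable A (fun a => (q a * p a)%:E).
Proof.
move=> mq qB.
have ip : leb.-integrable A (EFin \o p).
  apply/integrableP; split; first by apply/measurable_EFinP; exact: p_meas.
  suff -> : (\int[leb]_(x in A) `|(EFin \o p) x| = \int[leb]_(a in A) (p a)%:E)%E.
    by rewrite p_int1 ltry.
  apply: eq_integral => a /set_mem Aa /=; have /andP[p0 _] := p_bnd _ Aa; by rewrite ger0_norm.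
have iB := integrableZl mA B ip.
apply: (le_integrable mA _ _ iB).
  apply/measurable_EFinP; apply: measurable_funM => //; exact: p_meas.
move=> a Aa /=; rewrite lee_fin !normrM.
by rewrite ler_wpM2r // (le_trans (qB a Aa) (ler_norm B)).
Qed.

Lemma qp_shift (q : R -> R) (B c : R) : measurable_fun A q -> (forall a, A a -> `|q a| <= B) ->
  (\int[leb]_(a in A) ((q a + c) * p a)%:E = \int[leb]_(a in A) (q a * p a)%:E + c%:E)%E.
Proof.
move=> mq qB.
have ip : leb.-integrable A (EFin \o p).
  apply: (eq_integrable mA (fun a => (cst 1 a * p a)%:E)).
    by move=> a _ /=; rewrite mul1r.
  by apply: (qp_int (cst 1) 1) => // a _; rewrite normr1.
have -> : (\int[leb]_(a in A) ((q a + c) * p a)%:E =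
   \int[leb]_(a in A) ((q a * p a)%:E + c%:E * (p a)%:E))%E.
  by apply: eq_integral => a _; rewrite -EFinM -EFinD mulrDl.
rewrite integralD //; first last.
- exact: integrableZl.
- exact: qp_int mq qB.
by rewrite integralZl // p_int1 mule1.
Qed.


Lemma cmp (q1 q2 : R -> R) (B1 B2 e mu : R) :
  measurable_fun A q1 -> measurable_fun A q2 ->
  (forall a, A a -> `|q1 a| <= B1) -> (forall a, A a -> `|q2 a| <= B2) ->
  (forall a, A a -> `|q1 a - q2 a| <= e) -> 0 <= mu ->
  let F := (\int[leb]_(a in A) (q1 a * p a + mu * (p a - p a ^+ 2))%:E)%E in
  let G := (\int[leb]_(a in A) (q2 a * p a)%:E)%E in
  (F <= G + (e + mu * Num.max `|1 - C| 1)%:E)%E /\ (G <= F + (e + mu * Num.max `|1 - C| 1)%:E)%E.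
Proof.
move=> mq1 mq2 b1 b2 be mu0 F G.
pose qF := fun a => q1 a + mu * (1 - p a).
have mqF : measurable_fun A qF.
  apply: measurable_funD => //; apply: measurable_funM => //.
  apply: measurable_funB => //; exact: p_meas.
have bF : forall a, A a -> `|qF a| <= B1 + mu * (1 + C).
  move=> a Aa; have /andP[p0 pC] := p_bnd a Aa.
  apply: le_trans (ler_normD _ _) _; apply: lerD; first exact: b1.
  rewrite normrM (ger0_norm mu0) ler_wpM2l //.
  by rewrite ler_norml; apply/andP; split; lra.
have eF : F = (\int[leb]_(a in A) (qF a * p a)%:E)%E.
  by apply: eq_integral => a _; rewrite /qF; congr (_%:E); ring.
have iF := qp_int qF _ mqF bF.
have iG := qp_int q2 _ mq2 b2.
have fF := integrable_fin_num mA iF.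
have fG := integrable_fin_num mA iG.
have hK1 : 1 <= Num.max `|1 - C| 1 by rewrite le_max lexx orbT.
have hK2 : `|1 - C| <= Num.max `|1 - C| 1 by rewrite le_max lexx.
have hK3 : C - 1 <= `|1 - C| by rewrite -normrN opprB ler_norm.
split.
- have h1 := qp_shift q2 B2 (e + mu) mq2 b2.
  have h2 : (F <= \int[leb]_(a in A) ((q2 a + (e + mu)) * p a)%:E)%E.
    rewrite eF; apply: le_integral => //.
      apply: (qp_int _ (B2 + `|e + mu|)).
        by apply: measurable_funD.
      move=> a Aa; apply: le_trans (ler_normD _ _) _; exact: lerD (b2 a Aa) _.
    move=> a /set_mem Aa; rewrite lee_fin; have /andP[p0 pC] := p_bnd a Aa.
    rewrite ler_wpM2r // /qF.
    have := be a Aa; rewrite ler_norml => /andP[_ h].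
    have : 0 <= mu * p a by apply: mulr_ge0.
    lra.
  rewrite h1 in h2; apply: le_trans h2 _.
  rewrite /G -(fineK fG) -!EFinD lee_fin.
  have : mu <= mu * Num.max `|1 - C| 1 by rewrite -{1}(mulr1 mu) ler_wpM2l.
  lra.
- have h1 := qp_shift q2 B2 (mu * (1 - C) - e) mq2 b2.
  have h2 : (\int[leb]_(a in A) ((q2 a + (mu * (1 - C) - e)) * p a)%:E <= F)%E.
    rewrite eF; apply: le_integral => //.
      apply: (qp_int _ (B2 + `|mu * (1 - C) - e|)).
        by apply: measurable_funD.
      move=> a Aa; apply: le_trans (ler_normD _ _) _; exact: lerD (b2 a Aa) _.
    move=> a /set_mem Aa; rewrite lee_fin; have /andP[p0 pC] := p_bnd a Aa.
    rewrite ler_wpM2r // /qF.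
    have := be a Aa; rewrite ler_norml => /andP[h _].
    have : mu * (1 - C) <= mu * (1 - p a) by rewrite ler_wpM2l //; lra.
    lra.
  rewrite h1 eF in h2; rewrite eF /G.
  rewrite -(fineK fF) -(fineK fG) -EFinD lee_fin.
  rewrite -(fineK fF) -(fineK fG) -EFinD lee_fin in h2.
  have : mu * (C - 1) <= mu * Num.max `|1 - C| 1 by rewrite ler_wpM2l //; lra.
  lra.
Qed.
End L.

Arguments Qmeas {R d S P Rew gamma V MR MV} mRew hMR mV hMV g0 s.
Arguments Qbnd {R d S P Rew gamma V MR MV} mRew hMR mV hMV g0 s a.
Arguments Qdiff {R d S P Rew gamma V MR MV} mRew hMR mV hMV g0 {V2 D} s a.
Arguments cmp {R A C p} mA hp {q1 q2 B1 B2 e mu}.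

Theorem propositionS2 (R : realType) (d : measure_display) (S : measurableType d)
  (A : set R) (P : R.-pker (S * R)%type ~> S) (Rew : S -> S -> R -> R)
  (gamma C mu : R) (Vmu Vstar : S -> R) :
  measurable A ->
  0 <= gamma < 1 ->
  measurable_fun setT (fun x : S * (S * R) => Rew x.1 x.2.1 x.2.2) ->
  (exists M : R, forall s' s a, `|Rew s' s a| <= M) ->
  0 < mu ->
  measurable_fun setT Vmu -> (exists M : R, forall s, `|Vmu s| <= M) ->
  (forall s, Bmuop A C P Rew gamma mu Vmu s = (Vmu s)%:E) ->
  measurable_fun setT Vstar -> (exists M : R, forall s, `|Vstar s| <= M) ->
  (forall s, Bop A C P Rew gamma Vstar s = (Vstar s)%:E) ->
  forall s, `|Vmu s - Vstar s| <= mu * Num.max `|1 - C| 1 / (1 - gamma).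
Proof.
move=> mA' /andP[g0 g1] mRew [MR hMR] mu0 mVmu [M1 hM1] fixmu mVs [M2 hM2] fixs s0.
have mA : @measurable _ (measurableTypeR R) A := mA'.
pose MV := Num.max M1 M2.
have hV1 : forall s, `|Vmu s| <= MV by move=> s; rewrite le_max hM1.
have hV2 : forall s, `|Vstar s| <= MV by move=> s; rewrite le_max hM2 orbT.
pose K := Num.max `|1 - C| 1.
pose E := [set `|Vmu s - Vstar s| | s in [set: S]].
have hsE : has_sup E.
  split; first by exists `|Vmu s0 - Vstar s0|, s0.
  exists (MV + MV) => _ [s _ <-].
  by apply: le_trans (ler_normB _ _) _; apply: lerD.
pose D := sup E.
have hD : forall s, `|Vmu s - Vstar s| <= D.
  by move=> s; apply: sup_upper_bound => //; exists s.
have key : forall s, `|Vmu s - Vstar s| <= gamma * D + mu * K.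
  move=> s.
  have q1m := measurable_funS measurableT (@subsetT _ A)
    (Qmeas (P:=P) mRew hMR mVmu hV1 g0 s).
  have q2m := measurable_funS measurableT (@subsetT _ A)
    (Qmeas (P:=P) mRew hMR mVs hV2 g0 s).
  have H : forall pi, PiC A C pi ->
    let F := (\int[lebesgue_measure]_(a in A) (Qfun P Rew gamma Vmu s a * pi s a
                  + mu * (pi s a - pi s a ^+ 2))%:E)%E in
    let G := (\int[lebesgue_measure]_(a in A) (Qfun P Rew gamma Vstar s a * pi s a)%:E)%E in
    (F <= G + (gamma * D + mu * K)%:E)%E /\ (G <= F + (gamma * D + mu * K)%:E)%E.
    move=> pi hpi.
    have HH := (cmp mA (hpi s) q1m q2m
      (fun a _ => Qbnd (P:=P) mRew hMR mVmu hV1 g0 s a)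
      (fun a _ => Qbnd (P:=P) mRew hMR mVs hV2 g0 s a)
      (fun a _ => Qdiff (P:=P) mRew hMR mVmu hV1 g0 s a mVs hV2 hD) (ltW mu0)).
    exact HH.
  have up : ((Vmu s)%:E <= (Vstar s)%:E + (gamma * D + mu * K)%:E)%E.
    rewrite -fixmu -fixs; apply: ge_ereal_sup => _ [pi hpi <-].
    have [h1 _] := H pi hpi.
    apply: le_trans h1 _; apply: leeD => //.
    by apply: ereal_sup_ubound; exists pi.
  have lo : ((Vstar s)%:E <= (Vmu s)%:E + (gamma * D + mu * K)%:E)%E.
    rewrite -fixmu -fixs; apply: ge_ereal_sup => _ [pi hpi <-].
    have [_ h2] := H pi hpi.
    apply: le_trans h2 _; apply: leeD => //.
    by apply: ereal_sup_ubound; exists pi.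
  rewrite -EFinD lee_fin in up; rewrite -EFinD lee_fin in lo.
  rewrite ler_norml; apply/andP; split; lra.
have DK : D <= gamma * D + mu * K.
  by apply: ge_sup; [exists `|Vmu s0 - Vstar s0|, s0 | move=> _ [s _ <-]; exact: key].
have g1' : 0 < 1 - gamma by lra.
apply: le_trans (hD s0) _.
rewrite -/K ler_pdivlMr //.
lra.
Qed.
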